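(* There are $2^{\aleph_0}$ Epstein incomplete logics. More precisely, with $p,q$ distinct propositional letters, $p^0:=q\looparrowright p$, $p^{n+1}:=p\to p^n$ and $\Lambda_S:=\{q\looparrowright p^m:m\in S\}$: for every non-empty $S\subseteq\omega\setminus\{0\}$ the logic $\mathcal{F}\Lambda_S$ is Epstein incomplete, and the logics $\mathcal{F}\Lambda_S$ for distinct such $S$ are pairwise distinct.
   Context: Language: propositional letters $\Phi=\{p_0,p_1,\dots\}$; connectives $\neg$, $\lor,\wedge,\to,\leftrightarrow,\vartriangle,\looparrowright$; $\mathsf{FOR}$ the set of all formulas. An Epstein model is $\langle v,\mathfrak{R}\rangle$ with $v:\Phi\to\{0,1\}$ and $\mathfrak{R}\subseteq\mathsf{FOR}^2$ (an Epstein relation); truth: letters via $v$, boolean connectives classical, $\langle v,\mathfrak{R}\rangle\vDash\varphi\vartriangle\psi$ iff both true and $\langle\varphi,\psi\rangle\in\mathfrak{R}$; $\langle v,\mathfrak{R}\rangle\vDash\varphi\looparrowright\psi$ iff $\varphi\to\psi$ true and $\langle\varphi,\psi\rangle\in\mathfrak{R}$. $\mathfrak{R}\vDash\varphi$ iff true under every valuation. $\mathcal{F}$ is the least set containing all classical tautologies of the language and the axioms $(p\looparrowright q)\to(p\to q)$, $(p\vartriangle q)\leftrightarrow((p\looparrowright q)\wedge(p\wedge q))$, closed under uniform substitution and modus ponens; $\mathcal{F}\Lambda$ is the least set containing $\mathcal{F}\cup\Lambda$ closed under uniform substitution and modus ponens. A logic is a set of formulas containing $\mathcal{F}$ closed under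 uniform substitution and modus ponens. A logic $\lambda$ is Epstein complete iff there is a set $X$ of Epstein relations with $\lambda=\{\varphi:\mathfrak{R}\vDash\varphi\text{ for all }\mathfrak{R}\in X\}$; otherwise it is Epstein incomplete. *)

(* Defs.v *)
From Stdlib Require Import Arith.

Inductive form : Type :=
| Var : nat -> form
| Neg : form -> form
| Or  : form -> form -> form
| And : form -> form -> form
| Imp : form -> form -> form
| Iff : form -> form -> form
| Tri : form -> form -> form
| Loop : form -> form -> form.

Fixpoint beval (w : form -> bool) (f : form) : bool :=
  match f with
  | Var n => w (Var n)
  | Neg a => negb (beval w a)
  | Or a b => beval w a || beval w b
  | And a b => beval w a && beval w b
  | Imp a b => implb (beval w a) (beval w b)
  | Iff a b => Bool.eqb (beval w a) (beval w b)
  | Tri a b => w (Tri a b)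
  | Loop a b => w (Loop a b)
  end.

Definition tautology (f : form) : Prop := forall w : form -> bool, beval w f = true.

Fixpoint subst (s : nat -> form) (f : form) : form :=
  match f with
  | Var n => s n
  | Neg a => Neg (subst s a)
  | Or a b => Or (subst s a) (subst s b)
  | And a b => And (subst s a) (subst s b)
  | Imp a b => Imp (subst s a) (subst s b)
  | Iff a b => Iff (subst s a) (subst s b)
  | Tri a b => Tri (subst s a) (subst s b)
  | Loop a b => Loop (subst s a) (subst s b)
  end.

Definition p : form := Var 0.
Definition q : form := Var 1.

Definition ax1 : form := Imp (Loop p q) (Imp p q).
Definition ax2 : form := Iff (Tri p q) (And (Loop p q) (And p q)).

Inductive FL (Lam : form -> Prop) : form -> Prop :=
| FL_taut : forall f, tautology f -> FL Lam f
| FL_ax1 : FL Lam ax1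
| FL_ax2 : FL Lam ax2
| FL_lam : forall f, Lam f -> FL Lam f
| FL_subst : forall s f, FL Lam f -> FL Lam (subst s f)
| FL_mp : forall f g, FL Lam f -> FL Lam (Imp f g) -> FL Lam g.

Definition F : form -> Prop := FL (fun _ => False).

Definition is_logic (lam : form -> Prop) : Prop :=
  (forall f, F f -> lam f) /\
  (forall s f, lam f -> lam (subst s f)) /\
  (forall f g, lam f -> lam (Imp f g) -> lam g).

Definition erel := form -> form -> Prop.

Fixpoint sat (v : nat -> bool) (R : erel) (f : form) : Prop :=
  match f with
  | Var n => v n = true
  | Neg a => ~ sat v R a
  | Or a b => sat v R a \/ sat v R b
  | And a b => sat v R a /\ sat v R b
  | Imp a b => sat v R a -> sat v R b
  | Iff a b => sat v R a <-> sat v R b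
  | Tri a b => sat v R a /\ sat v R b /\ R a b
  | Loop a b => (sat v R a -> sat v R b) /\ R a b
  end.

Definition valid_in (R : erel) (f : form) : Prop := forall v : nat -> bool, sat v R f.

Definition epstein_complete (lam : form -> Prop) : Prop :=
  exists X : erel -> Prop, forall f, lam f <-> (forall R, X R -> valid_in R f).

Fixpoint ppow (n : nat) : form :=
  match n with
  | 0 => Loop q p
  | S m => Imp p (ppow m)
  end.

Definition LamS (S : nat -> Prop) (f : form) : Prop :=
  exists m, S m /\ f = Loop q (ppow m).

(* Main.v *)
Require Import Defs.
From Stdlib Require Import Classical ClassicalDescription.

Definition cc : form := And p (Neg p).

Fixpoint pw (A B : form) (k : nat) : form :=
  match k with 0 => Loop A B | S j => Imp B (pw A B j) end.

Lemma subst_ppow s k : subst s (ppow k) = pw (s 1) (s 0) k.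
Proof. induction k; simpl; [reflexivity| rewrite IHk; reflexivity]. Qed.

Lemma subst_comp s s' f : subst s (subst s' f) = subst (fun n => subst s (s' n)) f.
Proof. induction f; simpl; try rewrite IHf; try rewrite IHf1; try rewrite IHf2; reflexivity. Qed.

Lemma pw_inj A B B' k k' : pw A B k = pw A B' k' -> k = k'.
Proof.
  revert k'; induction k; intros [|k'] H; simpl in H; try discriminate; auto.
  injection H; intros H1 _. f_equal; eauto.
Qed.

Definition dec (P : Prop) : bool := if excluded_middle_informative P then true else false.
Lemma dec_true P : dec P = true <-> P.
Proof. unfold dec; destruct (excluded_middle_informative P); split; intros; auto; try discriminate; contradiction. Qed.

Lemma taut_sat v R s f : tautology f -> sat v R (subst s f).
Proof.
  intro Ht.
  set (w := fun g => dec (sat v R (subst s g))).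
  assert (Hb : forall g, beval w g = true <-> sat v R (subst s g)).
  { induction g; cbn [beval subst sat];
    [ exact (dec_true _)
    | generalize IHg; destruct (beval w g)
    | generalize IHg1 IHg2; destruct (beval w g1), (beval w g2) ..
    | exact (dec_true _) | exact (dec_true _) ];
    simpl; intuition discriminate. }
  apply Hb, Ht.
Qed.

Definition Good (R : erel) (f : form) : Prop := forall s v, sat v R (subst s f).

Lemma cc_unsat v R : ~ sat v R cc.
Proof. simpl; tauto. Qed.

Lemma soundness (T : nat -> Prop) (R : erel) :
  ~ T 0 -> (forall a b, a <> cc -> R a b) -> (forall a B k, T k -> R a (pw a B k)) ->
  forall f, FL (LamS T) f -> Good R f.
Proof.
  intros HT0 HR1 HR2 f Hf; induction Hf; intros s0 v.
  - apply taut_sat; auto.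
  - simpl; tauto.
  - simpl; tauto.
  - destruct H as [m [Hm ->]]. simpl. rewrite subst_ppow.
    split; [| apply HR2; auto].
    intro HA. assert (Hne : s0 1 <> cc) by (intro E; rewrite E in HA; exact (cc_unsat _ _ HA)).
    assert (G : forall j, sat v R (s0 0) -> sat v R (pw (s0 1) (s0 0) j)).
    { induction j; simpl; intros HB; [split; auto|auto]. }
    destruct m; [contradiction|]. simpl. intro HB; apply G; auto.
  - rewrite subst_comp. apply IHHf.
  - specialize (IHHf2 s0 v). simpl in IHHf2. auto.
Qed.

Definition s0 (n : nat) : form := match n with 1 => cc | _ => Var n end.

Lemma part1 S : (exists m, S m) -> ~ S 0 -> ~ epstein_complete (FL (LamS S)).
Proof.
  intros [m Hm] HS0 [X HX].
  set (phi := Imp (Imp q p) (Loop q p)).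
  assert (Hphi : FL (LamS S) phi).
  { apply HX. intros R HXR v.
    assert (Hq : valid_in R (Loop q (ppow m))) by
      (apply (proj1 (HX _)); [apply FL_lam; exists m; auto| auto]).
    assert (Rqp : R q p).
    { specialize (Hq (fun _ => true)). destruct Hq as [Hi _].
      assert (G : forall j, sat (fun _ => true) R (ppow j) -> R q p).
      { induction j; simpl; [tauto| intro H; apply IHj, H; reflexivity]. }
      apply (G m), Hi; reflexivity. }
    simpl. intro H; split; auto. }
  pose (R0 := fun a b => ~ (a = cc /\ b = p)).
  assert (G := soundness S R0 HS0 ltac:(intros a b H [E _]; auto)
    ltac:(intros a B k _ [_ E]; destruct k; discriminate) phi Hphi s0 (fun _ => true)).
  simpl in G. destruct G as [_ HR]; [intros _; reflexivity|]. apply HR; split; reflexivity.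
Qed.

Lemma part2 S T m : S m -> ~ T m -> ~ T 0 ->
  ~ (forall f, FL (LamS S) f <-> FL (LamS T) f).
Proof.
  intros Hm HTm HT0 Heq.
  assert (H : FL (LamS T) (Loop q (ppow m))) by (apply Heq, FL_lam; exists m; auto).
  pose (R0 := fun a b => ~ (a = cc /\ b = pw cc p m)).
  assert (G := soundness T R0 HT0 ltac:(intros a b H' [E _]; auto)
    ltac:(intros a B k Hk [E1 E2]; subst a; apply pw_inj in E2; subst; auto)
    _ H s0 (fun _ => true)).
  simpl in G. rewrite subst_ppow in G. destruct G as [_ HR]. apply HR; split; reflexivity.
Qed.

Theorem mainTheorem10 :
  (forall S : nat -> Prop, (exists m, S m) -> ~ S 0 ->
     ~ epstein_complete (FL (LamS S))) /\
  (forall S T : nat -> Prop,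
     (exists m, S m) -> ~ S 0 -> (exists m, T m) -> ~ T 0 ->
     ~ (forall m, S m <-> T m) ->
     ~ (forall f, FL (LamS S) f <-> FL (LamS T) f)).
Proof.
  split; [exact part1|].
  intros S T _ HS0 _ HT0 Hne Heq.
  apply not_all_ex_not in Hne. destruct Hne as [m Hm].
  destruct (classic (S m)) as [HSm|HSm].
  - apply (part2 S T m HSm); auto; tauto.
  - assert (T m) by tauto.
    apply (part2 T S m); auto; try tauto. intro f; symmetry; auto.
Qed.
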